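(* Let $H\in\mathbb{R}$, let $U\subset\mathbb{C}$ be an open set containing the closed unit disc $\overline{\mathbb{D}}$, and let $f:U\to\mathbb{R}^3$ be a conformal immersion with constant mean curvature $H$ (with respect to a unit normal field $N$), whose boundary curve $\gamma(t)=f(e^{it})$, $t\in[0,2\pi]$, is a regular real-analytic closed curve. Let $\kappa_n(t)$ and $\tau_g(t)$ be the normal curvature and geodesic torsion of $\gamma$ at $\gamma(t)$, and let $\frac{ds}{dt}=|\gamma'(t)|$, where $s$ is arc length with respect to the metric of $\mathbb{R}^3$. Then \[\int_0^{2\pi}(H-\kappa_n(t))\left(\frac{ds}{dt}\right)^2dt=0\qquad\text{and}\qquad \int_0^{2\pi}\tau_g(t)\left(\frac{ds}{dt}\right)^2dt=0.\] In particular, $H=\frac{1}{M}\int_0^{2\pi}\kappa_n(t)\left(\frac{ds}{dt}\right)^2dt$, where $M=\int_0^{2\pi}\left(\frac{ds}{dt}\right)^2dt$.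
   Context: Conformal means $\langle f_x,f_x\rangle=\langle f_y,f_y\rangle>0$ and $\langle f_x,f_y\rangle=0$ for $z=x+iy$; mean curvature $H=\frac12\nu^{-2}\langle f_{xx}+f_{yy},N\rangle$ with $\nu^2=\langle f_x,f_x\rangle$. Along the boundary curve, with $X=d\gamma/ds$ the unit tangent, $N$ the surface unit normal restricted to $\gamma$, and $Y=N\times X$, the normal curvature is $\kappa_n=\langle dX/ds,N\rangle$ and the geodesic torsion is $\tau_g=\langle dY/ds,N\rangle$. The parameter $t$ is the one for which $z=e^{it}$ is the restriction of the conformal coordinate $z$ of $f$ to $\partial\mathbb{D}$. *)

(* Defs.v *)
From Stdlib Require Import Reals.
From Coquelicot Require Import Coquelicot.
Open Scope R_scope.

Definition V3 : Type := (R * R * R)%type.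
Definition v1 (v : V3) : R := fst (fst v).
Definition v2 (v : V3) : R := snd (fst v).
Definition v3 (v : V3) : R := snd v.
Definition mk3 (a b c : R) : V3 := (a, b, c).
Definition vadd (u v : V3) : V3 := mk3 (v1 u + v1 v) (v2 u + v2 v) (v3 u + v3 v).
Definition vscal (k : R) (v : V3) : V3 := mk3 (k * v1 v) (k * v2 v) (k * v3 v).
Definition dot (u v : V3) : R := v1 u * v1 v + v2 u * v2 v + v3 u * v3 v.
Definition vnorm (v : V3) : R := sqrt (dot v v).
Definition cross (u v : V3) : V3 :=
  mk3 (v2 u * v3 v - v3 u * v2 v)
      (v3 u * v1 v - v1 u * v3 v)
      (v1 u * v2 v - v2 u * v1 v).

Definition dV (c : R -> V3) (t : R) : V3 :=
  mk3 (Derive (fun s => v1 (c s)) t)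
      (Derive (fun s => v2 (c s)) t)
      (Derive (fun s => v3 (c s)) t).

Definition Dp (b : bool) (g : R -> R -> R) : R -> R -> R :=
  fun x y => if b then Derive (fun t => g t y) x else Derive (fun t => g x t) y.
Definition Dlist (l : list bool) (g : R -> R -> R) : R -> R -> R :=
  List.fold_right Dp g l.

Definition smooth_on (U : R -> R -> Prop) (g : R -> R -> R) : Prop :=
  forall (l : list bool) (x y : R), U x y ->
    ex_derive (fun t => Dlist l g t y) x /\
    ex_derive (fun t => Dlist l g x t) y /\
    continuous (fun p : R * R => Dlist l g (fst p) (snd p)) (x, y).

Definition smooth3_on (U : R -> R -> Prop) (F : R -> R -> V3) : Prop :=
  smooth_on U (fun x y => v1 (F x y)) /\
  smooth_on U (fun x y => v2 (F x y)) /\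
  smooth_on U (fun x y => v3 (F x y)).

Definition pdx (F : R -> R -> V3) : R -> R -> V3 := fun x y =>
  mk3 (Derive (fun t => v1 (F t y)) x)
      (Derive (fun t => v2 (F t y)) x)
      (Derive (fun t => v3 (F t y)) x).
Definition pdy (F : R -> R -> V3) : R -> R -> V3 := fun x y =>
  mk3 (Derive (fun t => v1 (F x t)) y)
      (Derive (fun t => v2 (F x t)) y)
      (Derive (fun t => v3 (F x t)) y).

Definition open_set2 (U : R -> R -> Prop) : Prop :=
  open (fun p : R * R => U (fst p) (snd p)).
Definition contains_closed_disc (U : R -> R -> Prop) : Prop :=
  forall x y, x ^ 2 + y ^ 2 <= 1 -> U x y.

Definition conformal_immersion_on (U : R -> R -> Prop) (f : R -> R -> V3) : Prop :=
  smooth3_on U f /\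
  forall x y, U x y ->
    dot (pdx f x y) (pdx f x y) = dot (pdy f x y) (pdy f x y) /\
    0 < dot (pdx f x y) (pdx f x y) /\
    dot (pdx f x y) (pdy f x y) = 0.

Definition unit_normal_on (U : R -> R -> Prop) (f N : R -> R -> V3) : Prop :=
  smooth3_on U N /\
  forall x y, U x y ->
    dot (N x y) (N x y) = 1 /\
    dot (N x y) (pdx f x y) = 0 /\
    dot (N x y) (pdy f x y) = 0.

Definition mean_curvature (f N : R -> R -> V3) (x y : R) : R :=
  / 2 * / dot (pdx f x y) (pdx f x y) *
  dot (vadd (pdx (pdx f) x y) (pdy (pdy f) x y)) (N x y).

Definition has_constant_mean_curvature_on (U : R -> R -> Prop)
  (f N : R -> R -> V3) (H : R) : Prop :=
  forall x y, U x y -> mean_curvature f N x y = H.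

Definition real_analytic (g : R -> R) : Prop :=
  forall t0 : R, exists (r : R) (a : nat -> R), 0 < r /\
    forall t, Rabs (t - t0) < r -> is_pseries a (t - t0) (g t).

Definition bcurve (f : R -> R -> V3) (t : R) : V3 := f (cos t) (sin t).
Definition bnormal (N : R -> R -> V3) (t : R) : V3 := N (cos t) (sin t).

Definition regular_analytic_curve (c : R -> V3) : Prop :=
  real_analytic (fun t => v1 (c t)) /\
  real_analytic (fun t => v2 (c t)) /\
  real_analytic (fun t => v3 (c t)) /\
  forall t, dV c t <> mk3 0 0 0.

Definition dsdt (f : R -> R -> V3) (t : R) : R := vnorm (dV (bcurve f) t).
Definition tangentX (f : R -> R -> V3) (t : R) : V3 :=
  vscal (/ dsdt f t) (dV (bcurve f) t).
Definition conormalY (f N : R -> R -> V3) (t : R) : V3 :=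
  cross (bnormal N t) (tangentX f t).
(* kappa_n = <dX/ds, N>, with d/ds = (dt/ds) d/dt *)
Definition normal_curvature (f N : R -> R -> V3) (t : R) : R :=
  / dsdt f t * dot (dV (tangentX f) t) (bnormal N t).
Definition geodesic_torsion (f N : R -> R -> V3) (t : R) : R :=
  / dsdt f t * dot (dV (conormalY f N) t) (bnormal N t).

(* Main.v *)
Require Import Defs.
From Stdlib Require Import Reals Lra Psatz List FunctionalExtensionality.
From Coquelicot Require Import Coquelicot.
Open Scope R_scope.

Section Smooth.
Variable U : R -> R -> Prop.
Hypothesis HU : open_set2 U.

Lemma open_loc x y : U x y -> locally_2d U x y.
Proof.
  intros H. apply locally_2d_locally.
  apply (HU (x,y)). exact H.
Qed.

Lemma smooth_D b g : smooth_on U g -> smooth_on U (Dp b g).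
Proof.
  intros Hs l x y Hu. specialize (Hs (l ++ b :: nil) x y Hu).
  unfold Dlist in *. rewrite fold_right_app in Hs. exact Hs.
Qed.

Lemma sm_ex_x g x y : smooth_on U g -> U x y -> ex_derive (fun t => g t y) x.
Proof. intros Hs Hu. exact (proj1 (Hs nil x y Hu)). Qed.
Lemma sm_ex_y g x y : smooth_on U g -> U x y -> ex_derive (fun t => g x t) y.
Proof. intros Hs Hu. exact (proj1 (proj2 (Hs nil x y Hu))). Qed.
Lemma sm_cont g x y : smooth_on U g -> U x y -> continuity_2d_pt g x y.
Proof.
  intros Hs Hu. apply continuity_2d_pt_filterlim.
  exact (proj2 (proj2 (Hs nil x y Hu))).
Qed.

Lemma sm_diff2 g x y : smooth_on U g -> U x y -> ex_diff_n g 2 x y.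
Proof.
  intros Hs Hu.
  pose proof (smooth_D true g Hs) as Hx.
  pose proof (smooth_D false g Hs) as Hy.
  pose proof (smooth_D true _ Hx) as Hxx.
  pose proof (smooth_D false _ Hx) as Hxy.
  pose proof (smooth_D true _ Hy) as Hyx.
  pose proof (smooth_D false _ Hy) as Hyy.
  simpl. repeat split.
  - apply sm_cont; auto.
  - apply sm_ex_x; auto.
  - apply sm_ex_y; auto.
  - exact (sm_cont _ _ _ Hx Hu).
  - exact (sm_ex_x _ _ _ Hx Hu).
  - exact (sm_ex_y _ _ _ Hx Hu).
  - exact (sm_cont _ _ _ Hxx Hu).
  - exact (sm_cont _ _ _ Hxy Hu).
  - exact (sm_cont _ _ _ Hy Hu).
  - exact (sm_ex_x _ _ _ Hy Hu).
  - exact (sm_ex_y _ _ _ Hy Hu).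
  - exact (sm_cont _ _ _ Hyx Hu).
  - exact (sm_cont _ _ _ Hyy Hu).
Qed.
End Smooth.

Lemma DL1 g x y dx dy : DL_pol 1 g x y dx dy = g x y + dx * Derive (fun t => g t y) x + dy * Derive (fun t => g x t) y.
Proof.
  unfold DL_pol, differential. simpl. unfold Binomial.C. simpl. unfold partial_derive. simpl. field.
Qed.

Lemma sm_diff U g x y : open_set2 U -> smooth_on U g -> U x y ->
  differentiable_pt_lim g x y (Dp true g x y) (Dp false g x y).
Proof.
  intros HU Hs Hu.
  assert (Hl : locally_2d (fun u v => ex_diff_n g 2 u v) x y).
  { apply locally_2d_impl with (2 := open_loc U HU x y Hu).
    apply locally_2d_forall. intros u v Huv. apply sm_diff2 with U; auto. }
  destruct (Taylor_Lagrange_2d g 1 x y Hl) as [D HD].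
  intros eps.
  set (d := eps / (Rabs D + 1)).
  assert (Hd : 0 < d) by (unfold d; apply Rdiv_lt_0_compat; [apply cond_pos | pose proof (Rabs_pos D); lra]).
  apply locally_2d_impl with (2 := HD).
  apply locally_2d_locally. exists (mkposreal d Hd).
  intros [u v] Hb Hineq. simpl in Hineq |- *.
  rewrite DL1 in Hineq. simpl.
  destruct Hb as [Hb1 Hb2]. simpl in Hb1, Hb2.
  unfold ball in Hb1, Hb2. simpl in Hb1, Hb2. unfold AbsRing_ball, abs, minus, plus, opp in Hb1, Hb2. simpl in Hb1, Hb2.
  set (m := Rmax (Rabs (u - x)) (Rabs (v - y))) in *.
  assert (Hm0 : 0 <= m) by (unfold m; apply Rle_trans with (Rabs (u-x)); [apply Rabs_pos | apply Rmax_l]).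
  assert (Hmd : m <= d).
  { change (Rabs (u - x) < d) in Hb1. change (Rabs (v - y) < d) in Hb2. unfold m. apply Rmax_lub; lra. }
  match goal with |- Rabs ?a <= _ => replace a with
     (g u v - (g x y + (u - x) * Derive (fun t => g t y) x + (v - y) * Derive (fun t => g x t) y)) by ring end.
  apply Rle_trans with (1 := Hineq).
  assert (Habs : Rabs D * d <= eps).
  { unfold d. pose proof (Rabs_pos D). pose proof (cond_pos eps).
    unfold Rdiv. assert (Hi : 0 < / (Rabs D + 1)) by (apply Rinv_0_lt_compat; lra).
    assert (Hi2 : (Rabs D + 1) * / (Rabs D + 1) = 1) by (apply Rinv_r; lra).
    nra. }
  pose proof (Rabs_pos D). pose proof (Rle_abs D).
  assert (H1 : Rabs D * m <= eps) by nra.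
  assert (H2 : D * m <= eps) by nra.
  nra.
Qed.

Lemma sm_chain U g p q t0 p' q' : open_set2 U -> smooth_on U g -> U (p t0) (q t0) ->
  is_derive p t0 p' -> is_derive q t0 q' ->
  is_derive (fun t => g (p t) (q t)) t0
    (Dp true g (p t0) (q t0) * p' + Dp false g (p t0) (q t0) * q').
Proof.
  intros HU Hs Hu Hp Hq. apply is_derive_Reals.
  apply derivable_pt_lim_comp_2d.
  - apply sm_diff with U; auto.
  - apply is_derive_Reals; auto.
  - apply is_derive_Reals; auto.
Qed.

Lemma sm_schwarz U g x y : open_set2 U -> smooth_on U g -> U x y ->
  Dp true (Dp false g) x y = Dp false (Dp true g) x y.
Proof.
  intros HU Hs Hu.
  pose proof (smooth_D U true g Hs) as Hx.
  pose proof (smooth_D U false g Hs) as Hy.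
  pose proof (smooth_D U false _ Hx) as Hxy.
  pose proof (smooth_D U true _ Hy) as Hyx.
  apply Schwarz.
  - apply locally_2d_impl with (2 := open_loc U HU x y Hu).
    apply locally_2d_forall. intros u v Huv. repeat split.
    + apply sm_ex_x with U; auto.
    + apply sm_ex_y with U; auto.
    + exact (sm_ex_x _ _ _ _ Hy Huv).
    + exact (sm_ex_y _ _ _ _ Hx Huv).
  - exact (sm_cont _ _ _ _ Hyx Hu).
  - exact (sm_cont _ _ _ _ Hxy Hu).
Qed.

Lemma cont2_comp g p q x y :
  continuity_2d_pt g (p x y) (q x y) -> continuity_2d_pt p x y -> continuity_2d_pt q x y ->
  continuity_2d_pt (fun x y => g (p x y) (q x y)) x y.
Proof.
  intros Hg Hp Hq eps.
  destruct (Hg eps) as [d Hd].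
  apply locally_2d_impl with (2 := locally_2d_and _ _ _ _ (Hp d) (Hq d)).
  apply locally_2d_forall. intros u v [H1 H2]. apply Hd; auto.
Qed.

Lemma Rball_eq (x : R) (e : posreal) (y : R) : ball x e y <-> Rabs (y - x) < e.
Proof. split; intros H; exact H. Qed.

Lemma loc_R (x : R) (P : R -> Prop) (d : posreal) :
  (forall y, Rabs (y - x) < d -> P y) -> locally x P.
Proof. intros H. exists d. intros y Hy. apply H. exact Hy. Qed.

Lemma cont_curve g p q t :
  continuity_2d_pt g (p t) (q t) -> @continuous R_UniformSpace R_UniformSpace p t -> @continuous R_UniformSpace R_UniformSpace q t ->
  @continuous R_UniformSpace R_UniformSpace (fun s => g (p s) (q s)) t.
Proof.
  intros Hg Hp Hq. apply filterlim_locally. intros eps.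
  destruct (Hg eps) as [d Hd].
  pose proof (proj1 (filterlim_locally (F := locally t) p (p t)) Hp d) as Hp'.
  pose proof (proj1 (filterlim_locally (F := locally t) q (q t)) Hq d) as Hq'.
  clear Hp Hq. rename Hp' into Hp. rename Hq' into Hq.
  eapply filter_imp; [|exact (filter_and _ _ Hp Hq)].
  intros s [H1 H2]. apply Rball_eq. apply Rball_eq in H1. apply Rball_eq in H2.
  apply Hd; auto.
Qed.

Lemma cont2_of_1d_x (h : R -> R) x y : continuous h x -> continuity_2d_pt (fun u v => h u) x y.
Proof.
  intros Hh eps. destruct (proj1 (filterlim_locally (F := locally _) h _) Hh eps) as [d Hd].
  exists d. intros u v H1 H2. apply (Hd u). exact H1.
Qed.
Lemma cont2_of_1d_y (h : R -> R) x y : continuous h y -> continuity_2d_pt (fun u v => h v) x y.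
Proof.
  intros Hh eps. destruct (proj1 (filterlim_locally (F := locally _) h _) Hh eps) as [d Hd].
  exists d. intros u v H1 H2. apply (Hd v). exact H2.
Qed.
Lemma cont2_1d_y h x y : continuity_2d_pt h x y -> continuous (fun t => h x t) y.
Proof.
  intros Hh. apply (cont_curve h (fun _ => x) (fun t => t)); auto.
  apply continuous_const. apply continuous_id.
Qed.

Lemma is_derive_eq (f : R -> R) x l l' : is_derive f x l -> l = l' -> is_derive f x l'.
Proof. intros H <-. exact H. Qed.

Lemma polar_sq r t : (r * cos t) ^ 2 + (r * sin t) ^ 2 = r ^ 2.
Proof. pose proof (sin2_cos2 t) as H. unfold Rsqr in H. nra. Qed.

Lemma cont2_rcos r t : continuity_2d_pt (fun r t => r * cos t) r t.
Proof.
  apply continuity_2d_pt_mult. apply continuity_2d_pt_id1.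
  apply cont2_of_1d_y. apply continuous_cos.
Qed.
Lemma cont2_rsin r t : continuity_2d_pt (fun r t => r * sin t) r t.
Proof.
  apply continuity_2d_pt_mult. apply continuity_2d_pt_id1.
  apply cont2_of_1d_y. apply continuous_sin.
Qed.

Lemma cont_cmul (c : R) (h : R -> R) x : continuous h x -> continuous (fun s => c * h s) x.
Proof.
  intros H. apply (continuous_mult (K := R_AbsRing) (fun _ => c) h). apply continuous_const. exact H.
Qed.

Lemma dpl_eq f x l l' : derivable_pt_lim f x l -> l = l' -> derivable_pt_lim f x l'.
Proof. intros H <-; exact H. Qed.

Section Radial.
Variables A Ax Ay B : R -> R -> R.
Hypothesis HdA : forall x y, x^2 + y^2 < 1 -> differentiable_pt_lim A x y (Ax x y) (Ay x y).
Hypothesis HdB : forall x y, x^2 + y^2 < 1 -> differentiable_pt_lim B x y (- Ay x y) (Ax x y).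
Hypothesis HcA : forall x y, x^2 + y^2 <= 1 -> continuity_2d_pt A x y.
Hypothesis HcAx : forall x y, x^2 + y^2 < 1 -> continuity_2d_pt Ax x y.
Hypothesis HcAy : forall x y, x^2 + y^2 < 1 -> continuity_2d_pt Ay x y.
Hypothesis H0 : A 0 0 = 0.

Let phi r t := A (r * cos t) (r * sin t).
Let Fr r t := cos t * Ax (r * cos t) (r * sin t) + sin t * Ay (r * cos t) (r * sin t).
Let g r := RInt (phi r) 0 (2 * PI).

Lemma in_disc r t : Rabs r < 1 -> (r * cos t) ^ 2 + (r * sin t) ^ 2 < 1.
Proof.
  intros H. rewrite polar_sq. assert (r^2 = Rabs r ^ 2) by (unfold Rabs; destruct Rcase_abs; ring).
  pose proof (Rabs_pos r). nra.
Qed.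

Lemma L1 r t : Rabs r < 1 -> is_derive (fun z => phi z t) r (Fr r t).
Proof.
  intros Hr. unfold phi, Fr. apply is_derive_Reals.
  eapply dpl_eq; [apply derivable_pt_lim_comp_2d with (l2 := cos t) (l3 := sin t)|].
  - apply HdA, in_disc; auto.
  - apply is_derive_Reals. auto_derive; auto; ring.
  - apply is_derive_Reals. auto_derive; auto; ring.
  - ring.
Qed.

Lemma L2 r t : Rabs r < 1 ->
  is_derive (fun s => B (r * cos s) (r * sin s)) t (r * Fr r t).
Proof.
  intros Hr. unfold Fr. apply is_derive_Reals.
  eapply dpl_eq; [apply derivable_pt_lim_comp_2d with (l2 := - r * sin t) (l3 := r * cos t)|].
  - apply HdB, in_disc; auto.
  - apply is_derive_Reals. auto_derive; auto; ring.
  - apply is_derive_Reals. auto_derive; auto; ring.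
  - ring.
Qed.

Lemma L4 r t : Rabs r < 1 -> continuity_2d_pt Fr r t.
Proof.
  intros Hr. unfold Fr.
  apply continuity_2d_pt_plus; apply continuity_2d_pt_mult.
  - apply cont2_of_1d_y. apply continuous_cos.
  - apply (cont2_comp Ax (fun r t => r * cos t) (fun r t => r * sin t)).
    apply HcAx, in_disc; auto. apply cont2_rcos. apply cont2_rsin.
  - apply cont2_of_1d_y. apply continuous_sin.
  - apply (cont2_comp Ay (fun r t => r * cos t) (fun r t => r * sin t)).
    apply HcAy, in_disc; auto. apply cont2_rcos. apply cont2_rsin.
Qed.

Lemma phi_cont r t : r ^ 2 <= 1 -> continuous (phi r) t.
Proof.
  intros Hr. unfold phi.
  apply (cont_curve A (fun s => r * cos s) (fun s => r * sin s)).
  - apply HcA. rewrite polar_sq. auto.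
  - apply (ex_derive_continuous (fun s => r * cos s)); auto_derive; auto.
  - apply (ex_derive_continuous (fun s => r * sin s)); auto_derive; auto.
Qed.

Lemma abs_sq r : Rabs r < 1 -> r ^ 2 <= 1.
Proof.
  intros H. assert (r^2 = Rabs r ^ 2) by (unfold Rabs; destruct Rcase_abs; ring).
  pose proof (Rabs_pos r). nra.
Qed.

Lemma L5 r : Rabs r < 1 -> is_derive g r (RInt (Fr r) 0 (2 * PI)).
Proof.
  intros Hr. unfold g.
  set (d := (1 - Rabs r) / 2).
  assert (Hd : 0 < d) by (unfold d; lra).
  assert (Hnear : forall y, Rabs (y - r) < d -> Rabs y < 1).
  { intros y Hy. pose proof (Rabs_triang (y - r) r). replace (y - r + r) with y in H by ring.
    unfold d in Hy. lra. }
  eapply is_derive_eq; [apply (is_derive_RInt_param phi 0 (2 * PI) r)|].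
  - apply loc_R with (mkposreal d Hd). intros y Hy t _. exists (Fr y t). apply L1. apply Hnear. exact Hy.
  - intros t _.
    apply continuity_2d_pt_ext_loc with Fr; [|apply L4; auto].
    exists (mkposreal d Hd). intros u v Hu Hv. simpl in Hu.
    symmetry. apply is_derive_unique. apply L1. apply Hnear; auto.
  - apply loc_R with (mkposreal d Hd). intros y Hy.
    apply (ex_RInt_continuous (V := R_CompleteNormedModule)). intros z _. apply phi_cont. apply abs_sq. apply Hnear; auto.
  - apply RInt_ext. intros t _. apply is_derive_unique. apply L1; auto.
Qed.

Lemma L6 r : 0 < r < 1 -> RInt (Fr r) 0 (2 * PI) = 0.
Proof.
  intros Hr. assert (Hr' : Rabs r < 1) by (rewrite Rabs_pos_eq; lra).
  set (psi := fun s => B (r * cos s) (r * sin s)).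
  transitivity (RInt (fun s => scal (/ r) (Derive psi s)) 0 (2 * PI)).
  { apply RInt_ext. intros t _. rewrite (is_derive_unique psi t _ (L2 r t Hr')).
    unfold scal; simpl; unfold mult; simpl. field. lra. }
  rewrite (RInt_scal (V := R_CompleteNormedModule)).
  2:{ apply (ex_RInt_continuous (V := R_CompleteNormedModule)). intros z _.
      apply continuous_ext with (fun s => r * Fr r s).
      { intros s. symmetry. apply is_derive_unique. apply L2; auto. }
      apply cont_cmul.
      apply cont2_1d_y. apply L4; auto. }
  rewrite RInt_Derive.
  - unfold psi. rewrite cos_2PI, sin_2PI, cos_0, sin_0.
    unfold scal; simpl; unfold mult; simpl. ring.
  - intros x _. exists (r * Fr r x). apply L2; auto.
  - intros x _.
    apply continuous_ext with (fun s => r * Fr r s).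
    { intros s. symmetry. apply is_derive_unique. apply L2; auto. }
    apply cont_cmul.
    apply cont2_1d_y. apply L4; auto.
Qed.

Lemma L7 r : 0 < r < 1 -> g r = 0.
Proof.
  intros Hr.
  assert (Hg0 : g 0 = 0).
  { unfold g, phi. transitivity (RInt (fun _ => 0) 0 (2 * PI)).
    2:{ rewrite RInt_const. unfold scal; simpl; unfold mult; simpl. ring. }
    apply RInt_ext. intros t _. rewrite !Rmult_0_l. rewrite H0. reflexivity. }
  destruct (MVT_gen g 0 r (fun _ => 0)) as [c [_ Hc]].
  - intros x Hx. rewrite Rmin_left, Rmax_right in Hx by lra.
    eapply is_derive_eq; [apply L5|].
    rewrite Rabs_pos_eq; lra. apply L6; lra.
  - intros x Hx. rewrite Rmin_left, Rmax_right in Hx by lra.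
    apply continuity_pt_filterlim. apply (ex_derive_continuous (K := R_AbsRing) (V := R_NormedModule) g).
    exists (RInt (Fr x) 0 (2 * PI)). apply L5. apply Rabs_def1; lra.
  - rewrite Hg0 in Hc. lra.
Qed.

Lemma L8 : g 1 = 0.
Proof.
  assert (Hunif : forall eps : posreal, Rabs (g 1) <= 2 * PI * eps).
  { intros eps.
    destruct (uniform_continuity_2d phi 0 1 0 (2 * PI)) with (eps := eps) as [d Hd].
    { intros x y Hx Hy. unfold phi.
      apply (cont2_comp A (fun r t => r * cos t) (fun r t => r * sin t)).
      apply HcA. rewrite polar_sq. nra. apply cont2_rcos. apply cont2_rsin. }
    set (r := Rmax (1/2) (1 - d / 2)).
    assert (Hr1 : 1/2 <= r) by apply Rmax_l.
    assert (Hr2 : 1 - d/2 <= r) by apply Rmax_r.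
    assert (Hr3 : r < 1).
    { unfold r. apply Rmax_lub_lt. lra. pose proof (cond_pos d). lra. }
    assert (Hgr : g r = 0) by (apply L7; lra).
    assert (Hrs : r ^ 2 <= 1) by (simpl; nra).
    assert (H1s : 1 ^ 2 <= 1) by (simpl; lra).
    replace (g 1) with (g 1 - g r) by lra.
    assert (Em : RInt (fun t => minus (phi 1 t) (phi r t)) 0 (2 * PI) = g 1 - g r).
    { unfold g. rewrite (RInt_minus (V := R_CompleteNormedModule)). reflexivity.
      apply (ex_RInt_continuous (V := R_CompleteNormedModule)). intros z _. apply phi_cont. exact H1s.
      apply (ex_RInt_continuous (V := R_CompleteNormedModule)). intros z _. apply phi_cont. exact Hrs. }
    rewrite <- Em.
    replace (2 * PI * eps) with ((2 * PI - 0) * eps) by ring.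
    apply abs_RInt_le_const.
    - pose proof PI_RGT_0. lra.
    - apply (ex_RInt_continuous (V := R_CompleteNormedModule)); intros z _.
      apply (continuous_minus (V := R_NormedModule)); apply phi_cont; assumption.
    - intros t Ht.
      apply Rlt_le. rewrite Rabs_minus_sym.
      pose proof (cond_pos d).
      apply Hd; [lra|lra|lra|lra| |].
      rewrite Rabs_left1; [|lra]. lra.
      rewrite Rminus_diag, Rabs_R0. apply cond_pos. }
  destruct (Req_dec (g 1) 0) as [E|E]; auto.
  exfalso. pose proof PI_RGT_0.
  assert (He : 0 < Rabs (g 1) / (4 * PI)).
  { apply Rdiv_lt_0_compat. apply Rabs_pos_lt; auto. lra. }
  specialize (Hunif (mkposreal _ He)). simpl in Hunif.
  assert (HH : 2 * PI * (Rabs (g 1) / (4 * PI)) = Rabs (g 1) / 2) by (field; lra).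
  rewrite HH in Hunif. pose proof (Rabs_pos_lt _ E). lra.
Qed.

Lemma radial : RInt (fun t => A (cos t) (sin t)) 0 (2 * PI) = 0.
Proof.
  transitivity (g 1); [|apply L8]. unfold g, phi. apply RInt_ext. intros t _. rewrite !Rmult_1_l. reflexivity.
Qed.
End Radial.

Lemma dpl_prod2 a0 b0 : differentiable_pt_lim (fun a b => a * b) a0 b0 b0 a0.
Proof.
  intros eps. exists eps. intros u v Hu Hv.
  replace (u * v - a0 * b0 - (b0 * (u - a0) + a0 * (v - b0))) with ((u - a0) * (v - b0)) by ring.
  rewrite Rabs_mult.
  set (m := Rmax (Rabs (u - a0)) (Rabs (v - b0))).
  assert (H1 : Rabs (u - a0) <= m) by apply Rmax_l.
  assert (H2 : Rabs (v - b0) <= m) by apply Rmax_r.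
  pose proof (Rabs_pos (u - a0)). pose proof (Rabs_pos (v - b0)).
  assert (Hv' : Rabs (v - b0) <= eps) by lra.
  apply Rle_trans with (Rabs (u - a0) * eps). apply Rmult_le_compat_l; lra.
  rewrite Rmult_comm. apply Rmult_le_compat_l. pose proof (cond_pos eps); lra. lra.
Qed.

Lemma dpl_plus2 a0 b0 : differentiable_pt_lim (fun a b => a + b) a0 b0 1 1.
Proof.
  intros eps. exists eps. intros u v Hu Hv.
  replace (u + v - (a0 + b0) - (1 * (u - a0) + 1 * (v - b0))) with 0 by ring.
  rewrite Rabs_R0. apply Rmult_le_pos. pose proof (cond_pos eps); lra.
  apply Rle_trans with (Rabs (u - a0)). apply Rabs_pos. apply Rmax_l.
Qed.

Lemma dpl_eq2 f x y a b a' b' : differentiable_pt_lim f x y a b -> a = a' -> b = b' ->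
  differentiable_pt_lim f x y a' b'.
Proof. intros H <- <-. exact H. Qed.

Lemma dpl_mult f g x y fx fy gx gy :
  differentiable_pt_lim f x y fx fy -> differentiable_pt_lim g x y gx gy ->
  differentiable_pt_lim (fun u v => f u v * g u v) x y (fx * g x y + f x y * gx) (fy * g x y + f x y * gy).
Proof.
  intros Hf Hg. eapply dpl_eq2;
  [apply (differentiable_pt_lim_comp (fun a b => a * b) f g x y (g x y) (f x y));
    [apply dpl_prod2|exact Hf|exact Hg]| |]; ring.
Qed.

Lemma dpl_plus f g x y fx fy gx gy :
  differentiable_pt_lim f x y fx fy -> differentiable_pt_lim g x y gx gy ->
  differentiable_pt_lim (fun u v => f u v + g u v) x y (fx + gx) (fy + gy).
Proof.
  intros Hf Hg. eapply dpl_eq2;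
  [apply (differentiable_pt_lim_comp (fun a b => a + b) f g x y 1 1);
    [apply dpl_plus2|exact Hf|exact Hg]| |]; ring.
Qed.

Lemma dpl_const c x y : differentiable_pt_lim (fun _ _ => c) x y 0 0.
Proof.
  intros eps. exists eps. intros u v Hu Hv.
  replace (c - c - (0 * (u - x) + 0 * (v - y))) with 0 by ring.
  rewrite Rabs_R0. apply Rmult_le_pos. pose proof (cond_pos eps); lra.
  apply Rle_trans with (Rabs (u - x)). apply Rabs_pos. apply Rmax_l.
Qed.

Lemma dpl_id1 x y : differentiable_pt_lim (fun u _ => u) x y 1 0.
Proof.
  intros eps. exists eps. intros u v Hu Hv.
  replace (u - x - (1 * (u - x) + 0 * (v - y))) with 0 by ring.
  rewrite Rabs_R0. apply Rmult_le_pos. pose proof (cond_pos eps); lra.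
  apply Rle_trans with (Rabs (u - x)). apply Rabs_pos. apply Rmax_l.
Qed.

Lemma dpl_id2 x y : differentiable_pt_lim (fun _ v => v) x y 0 1.
Proof.
  intros eps. exists eps. intros u v Hu Hv.
  replace (v - y - (0 * (u - x) + 1 * (v - y))) with 0 by ring.
  rewrite Rabs_R0. apply Rmult_le_pos. pose proof (cond_pos eps); lra.
  apply Rle_trans with (Rabs (u - x)). apply Rabs_pos. apply Rmax_l.
Qed.

Lemma dpl_ext f g x y a b : (forall u v, f u v = g u v) -> differentiable_pt_lim f x y a b ->
  differentiable_pt_lim g x y a b.
Proof.
  intros E H. apply differentiable_pt_lim_ext with f; auto.
  apply locally_2d_forall. auto.
Qed.

Lemma sos3_0 x y z : x * x + y * y + z * z = 0 -> x = 0 /\ y = 0 /\ z = 0.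
Proof. intros H. repeat split; nra. Qed.

Lemma frame_R (a1 a2 a3 b1 b2 b3 n1 n2 n3 w1 w2 w3 z1 z2 z3 E : R) :
  a1*a1 + a2*a2 + a3*a3 = E -> b1*b1 + b2*b2 + b3*b3 = E -> 0 < E ->
  a1*b1 + a2*b2 + a3*b3 = 0 -> n1*n1 + n2*n2 + n3*n3 = 1 ->
  n1*a1 + n2*a2 + n3*a3 = 0 -> n1*b1 + n2*b2 + n3*b3 = 0 ->
  E * (w1*z1 + w2*z2 + w3*z3) =
  (w1*a1 + w2*a2 + w3*a3) * (z1*a1 + z2*a2 + z3*a3) +
  (w1*b1 + w2*b2 + w3*b3) * (z1*b1 + z2*b2 + z3*b3) +
  E * (w1*n1 + w2*n2 + w3*n3) * (z1*n1 + z2*n2 + z3*n3).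
Proof.
  intros Ha Hb HE Hab Hn Hna Hnb.
  set (D := (a2*b3 - a3*b2) * n1 + (a3*b1 - a1*b3) * n2 + (a1*b2 - a2*b1) * n3).
  assert (HD2 : D * D = E * E).
  { assert (G : D * D = (a1*a1 + a2*a2 + a3*a3) * (b1*b1 + b2*b2 + b3*b3) * (n1*n1 + n2*n2 + n3*n3)
      + 2 * (a1*b1 + a2*b2 + a3*b3) * (n1*b1 + n2*b2 + n3*b3) * (n1*a1 + n2*a2 + n3*a3)
      - (a1*a1 + a2*a2 + a3*a3) * (n1*b1 + n2*b2 + n3*b3)^2
      - (b1*b1 + b2*b2 + b3*b3) * (n1*a1 + n2*a2 + n3*a3)^2
      - (n1*n1 + n2*n2 + n3*n3) * (a1*b1 + a2*b2 + a3*b3)^2) by (unfold D; ring).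
    rewrite G, Ha, Hb, Hab, Hn, Hna, Hnb. ring. }
  assert (HD0 : D <> 0).
  { intros E0. rewrite E0 in HD2. nra. }
  assert (X : E * (b2*n3 - b3*n2) - D * a1 = 0 /\ E * (b3*n1 - b1*n3) - D * a2 = 0 /\
              E * (b1*n2 - b2*n1) - D * a3 = 0).
  { apply sos3_0.
    assert (G : (E * (b2*n3 - b3*n2) - D * a1) * (E * (b2*n3 - b3*n2) - D * a1) +
                (E * (b3*n1 - b1*n3) - D * a2) * (E * (b3*n1 - b1*n3) - D * a2) +
                (E * (b1*n2 - b2*n1) - D * a3) * (E * (b1*n2 - b2*n1) - D * a3) =
                E * E * ((b1*b1 + b2*b2 + b3*b3) * (n1*n1 + n2*n2 + n3*n3) - (n1*b1 + n2*b2 + n3*b3)^2)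
                - 2 * E * D * D + D * D * (a1*a1 + a2*a2 + a3*a3)) by (unfold D; ring).
    rewrite G, Hb, Hn, Hnb, Ha. replace (2 * E * D * D) with (2 * E * (D * D)) by ring. rewrite HD2. ring. }
  assert (Y : E * (n2*a3 - n3*a2) - D * b1 = 0 /\ E * (n3*a1 - n1*a3) - D * b2 = 0 /\
              E * (n1*a2 - n2*a1) - D * b3 = 0).
  { apply sos3_0.
    assert (G : (E * (n2*a3 - n3*a2) - D * b1) * (E * (n2*a3 - n3*a2) - D * b1) +
                (E * (n3*a1 - n1*a3) - D * b2) * (E * (n3*a1 - n1*a3) - D * b2) +
                (E * (n1*a2 - n2*a1) - D * b3) * (E * (n1*a2 - n2*a1) - D * b3) =
                E * E * ((a1*a1 + a2*a2 + a3*a3) * (n1*n1 + n2*n2 + n3*n3) - (n1*a1 + n2*a2 + n3*a3)^2)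
                - 2 * E * D * D + D * D * (b1*b1 + b2*b2 + b3*b3)) by (unfold D; ring).
    rewrite G, Ha, Hn, Hna, Hb. replace (2 * E * D * D) with (2 * E * (D * D)) by ring. rewrite HD2. ring. }
  assert (Z : (a2*b3 - a3*b2) - D * n1 = 0 /\ (a3*b1 - a1*b3) - D * n2 = 0 /\
              (a1*b2 - a2*b1) - D * n3 = 0).
  { apply sos3_0.
    assert (G : ((a2*b3 - a3*b2) - D * n1) * ((a2*b3 - a3*b2) - D * n1) +
                ((a3*b1 - a1*b3) - D * n2) * ((a3*b1 - a1*b3) - D * n2) +
                ((a1*b2 - a2*b1) - D * n3) * ((a1*b2 - a2*b1) - D * n3) =
                ((a1*a1 + a2*a2 + a3*a3) * (b1*b1 + b2*b2 + b3*b3) - (a1*b1 + a2*b2 + a3*b3)^2)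
                - 2 * D * D + D * D * (n1*n1 + n2*n2 + n3*n3)) by (unfold D; ring).
    rewrite G, Ha, Hb, Hab, Hn. replace (2 * D * D) with (2 * (D * D)) by ring. rewrite HD2. ring. }
  destruct X as [X1 [X2 X3]]. destruct Y as [Y1 [Y2 Y3]]. destruct Z as [Z1 [Z2 Z3]].
  (* Cramer *)
  assert (C : D * (w1*z1 + w2*z2 + w3*z3) =
     (w1*(b2*n3 - b3*n2) + w2*(b3*n1 - b1*n3) + w3*(b1*n2 - b2*n1)) * (z1*a1 + z2*a2 + z3*a3) +
     (w1*(n2*a3 - n3*a2) + w2*(n3*a1 - n1*a3) + w3*(n1*a2 - n2*a1)) * (z1*b1 + z2*b2 + z3*b3) +
     (w1*(a2*b3 - a3*b2) + w2*(a3*b1 - a1*b3) + w3*(a1*b2 - a2*b1)) * (z1*n1 + z2*n2 + z3*n3)) by (unfold D; ring).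
  apply Rmult_eq_reg_l with D; auto.
  replace (D * (E * (w1 * z1 + w2 * z2 + w3 * z3))) with (E * (D * (w1 * z1 + w2 * z2 + w3 * z3))) by ring.
  rewrite C.
  assert (e1 : E * (b2*n3 - b3*n2) = D * a1) by lra.
  assert (e2 : E * (b3*n1 - b1*n3) = D * a2) by lra.
  assert (e3 : E * (b1*n2 - b2*n1) = D * a3) by lra.
  assert (f1 : E * (n2*a3 - n3*a2) = D * b1) by lra.
  assert (f2 : E * (n3*a1 - n1*a3) = D * b2) by lra.
  assert (f3 : E * (n1*a2 - n2*a1) = D * b3) by lra.
  assert (g1 : a2*b3 - a3*b2 = D * n1) by lra.
  assert (g2 : a3*b1 - a1*b3 = D * n2) by lra.
  assert (g3 : a1*b2 - a2*b1 = D * n3) by lra.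
  transitivity ((w1*(E*(b2*n3 - b3*n2)) + w2*(E*(b3*n1 - b1*n3)) + w3*(E*(b1*n2 - b2*n1))) * (z1*a1 + z2*a2 + z3*a3) +
     (w1*(E*(n2*a3 - n3*a2)) + w2*(E*(n3*a1 - n1*a3)) + w3*(E*(n1*a2 - n2*a1))) * (z1*b1 + z2*b2 + z3*b3) +
     E * (w1*(a2*b3 - a3*b2) + w2*(a3*b1 - a1*b3) + w3*(a1*b2 - a2*b1)) * (z1*n1 + z2*n2 + z3*n3)).
  { ring. }
  rewrite e1, e2, e3, f1, f2, f3, g1, g2, g3. ring.
Qed.

Lemma vec_ext (a b : V3) : v1 a = v1 b -> v2 a = v2 b -> v3 a = v3 b -> a = b.
Proof. destruct a as [[a1 a2] a3], b as [[b1 b2] b3]. unfold v1, v2, v3; simpl. intros -> -> ->. reflexivity. Qed.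

Lemma sm3_pdx U F : smooth3_on U F -> smooth3_on U (pdx F).
Proof.
  intros [h1 [h2 h3]]. split; [|split].
  exact (smooth_D U true _ h1). exact (smooth_D U true _ h2). exact (smooth_D U true _ h3).
Qed.
Lemma sm3_pdy U F : smooth3_on U F -> smooth3_on U (pdy F).
Proof.
  intros [h1 [h2 h3]]. split; [|split].
  exact (smooth_D U false _ h1). exact (smooth_D U false _ h2). exact (smooth_D U false _ h3).
Qed.

Section VF.
Variable U : R -> R -> Prop.
Hypothesis HU : open_set2 U.

Lemma dpl_c1 F x y : smooth3_on U F -> U x y ->
  differentiable_pt_lim (fun u v => v1 (F u v)) x y (v1 (pdx F x y)) (v1 (pdy F x y)).
Proof. intros [h _] Hu. exact (sm_diff U _ x y HU h Hu). Qed.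
Lemma dpl_c2 F x y : smooth3_on U F -> U x y ->
  differentiable_pt_lim (fun u v => v2 (F u v)) x y (v2 (pdx F x y)) (v2 (pdy F x y)).
Proof. intros [_ [h _]] Hu. exact (sm_diff U _ x y HU h Hu). Qed.
Lemma dpl_c3 F x y : smooth3_on U F -> U x y ->
  differentiable_pt_lim (fun u v => v3 (F u v)) x y (v3 (pdx F x y)) (v3 (pdy F x y)).
Proof. intros [_ [_ h]] Hu. exact (sm_diff U _ x y HU h Hu). Qed.

Lemma dot_dpl F G x y : smooth3_on U F -> smooth3_on U G -> U x y ->
  differentiable_pt_lim (fun u v => dot (F u v) (G u v)) x y
    (dot (pdx F x y) (G x y) + dot (F x y) (pdx G x y))
    (dot (pdy F x y) (G x y) + dot (F x y) (pdy G x y)).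
Proof.
  intros HF HG Hu. unfold dot.
  eapply dpl_eq2.
  apply dpl_plus; [apply dpl_plus|]; apply dpl_mult;
    first [apply dpl_c1 | apply dpl_c2 | apply dpl_c3]; auto.
  all: cbv beta; ring.
Qed.

Lemma cont_c1 F x y : smooth3_on U F -> U x y -> continuity_2d_pt (fun u v => v1 (F u v)) x y.
Proof. intros [h _] Hu. exact (sm_cont U _ x y h Hu). Qed.
Lemma cont_c2 F x y : smooth3_on U F -> U x y -> continuity_2d_pt (fun u v => v2 (F u v)) x y.
Proof. intros [_ [h _]] Hu. exact (sm_cont U _ x y h Hu). Qed.
Lemma cont_c3 F x y : smooth3_on U F -> U x y -> continuity_2d_pt (fun u v => v3 (F u v)) x y.
Proof. intros [_ [_ h]] Hu. exact (sm_cont U _ x y h Hu). Qed.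

Lemma cont_dot F G x y : smooth3_on U F -> smooth3_on U G -> U x y ->
  continuity_2d_pt (fun u v => dot (F u v) (G u v)) x y.
Proof.
  intros HF HG Hu. unfold dot.
  apply continuity_2d_pt_plus; [apply continuity_2d_pt_plus|]; apply continuity_2d_pt_mult;
    first [apply cont_c1 | apply cont_c2 | apply cont_c3]; auto.
Qed.

Lemma schwarz3 F x y : smooth3_on U F -> U x y -> pdx (pdy F) x y = pdy (pdx F) x y.
Proof.
  intros [h1 [h2 h3]] Hu. apply vec_ext.
  exact (sm_schwarz U _ x y HU h1 Hu).
  exact (sm_schwarz U _ x y HU h2 Hu).
  exact (sm_schwarz U _ x y HU h3 Hu).
Qed.

Lemma zero_on (Fs : R -> R -> R) c x y a b : (forall u v, U u v -> Fs u v = c) -> U x y ->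
  differentiable_pt_lim Fs x y a b -> a = 0 /\ b = 0.
Proof.
  intros Hc Hu Hd. destruct (differentiable_pt_lim_unique _ _ _ _ _ Hd) as [Ha Hb].
  pose proof (open_loc U HU x y Hu) as Hl.
  split.
  - rewrite <- Ha. rewrite (Derive_ext_loc _ (fun _ => c)). apply Derive_const.
    apply (locally_2d_1d_const_y (fun u v => Fs u v = c)).
    apply locally_2d_impl with (2 := Hl). apply locally_2d_forall. auto.
  - rewrite <- Hb. rewrite (Derive_ext_loc _ (fun _ => c)). apply Derive_const.
    apply (locally_2d_1d_const_x (fun u v => Fs u v = c)).
    apply locally_2d_impl with (2 := Hl). apply locally_2d_forall. auto.
Qed.

Lemma pdy_ext_on F G x y : (forall u v, U u v -> F u v = G u v) -> U x y -> pdy F x y = pdy G x y.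
Proof.
  intros E Hu. pose proof (open_loc U HU x y Hu) as Hl.
  assert (L : locally y (fun t => U x t)) by exact (locally_2d_1d_const_x U x y Hl).
  unfold pdy, mk3. f_equal; [f_equal|];
  apply Derive_ext_loc; eapply filter_imp; try exact L; intros t Ht; simpl; rewrite E; auto.
Qed.
End VF.

Lemma dot_comm a b : dot a b = dot b a.
Proof. unfold dot; ring. Qed.

Lemma dot_vadd a b n : dot (vadd a b) n = dot a n + dot b n.
Proof. destruct a as [[? ?] ?], b as [[? ?] ?], n as [[? ?] ?]. unfold dot, vadd, mk3, v1, v2, v3; simpl; ring. Qed.

Lemma frame (a b n w z : V3) E :
  dot a a = E -> dot b b = E -> 0 < E -> dot a b = 0 -> dot n n = 1 -> dot n a = 0 -> dot n b = 0 ->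
  E * dot w z = dot w a * dot z a + dot w b * dot z b + E * dot w n * dot z n.
Proof.
  destruct a as [[a1 a2] a3], b as [[b1 b2] b3], n as [[n1 n2] n3], w as [[w1 w2] w3], z as [[z1 z2] z3].
  unfold dot, v1, v2, v3; simpl. apply frame_R.
Qed.

Lemma dpl_minus f g x y fx fy gx gy :
  differentiable_pt_lim f x y fx fy -> differentiable_pt_lim g x y gx gy ->
  differentiable_pt_lim (fun u v => f u v - g u v) x y (fx - gx) (fy - gy).
Proof.
  intros Hf Hg.
  apply dpl_ext with (fun u v => f u v + (-1) * g u v). intros; ring.
  eapply dpl_eq2. apply dpl_plus. exact Hf. apply dpl_mult. apply dpl_const. exact Hg.
  all: cbv beta; ring.
Qed.

Section Cod.
Variables (U : R -> R -> Prop) (f N : R -> R -> V3) (H : R).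
Hypothesis HU : open_set2 U.
Hypothesis Hconf : conformal_immersion_on U f.
Hypothesis Hnor : unit_normal_on U f N.
Hypothesis Hcmc : has_constant_mean_curvature_on U f N H.

Lemma s_f : smooth3_on U f. Proof. exact (proj1 Hconf). Qed.
Lemma s_N : smooth3_on U N. Proof. exact (proj1 Hnor). Qed.
Ltac sm := repeat match goal with
  | |- smooth3_on _ (pdx _) => apply sm3_pdx
  | |- smooth3_on _ (pdy _) => apply sm3_pdy
  end; first [exact s_f | exact s_N].

Local Notation fx := (pdx f).
Local Notation fy := (pdy f).
Local Notation fxx := (pdx (pdx f)).
Local Notation fxy := (pdy (pdx f)).
Local Notation fyx := (pdx (pdy f)).
Local Notation fyy := (pdy (pdy f)).
Local Notation Nx := (pdx N).
Local Notation Ny := (pdy N).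

Lemma cmc0 x y : U x y -> dot (fxx x y) (N x y) + dot (fyy x y) (N x y) = 2 * H * dot (fx x y) (fx x y).
Proof.
  intros Hu. assert (Ep : 0 < dot (fx x y) (fx x y)) by apply (proj2 Hconf x y Hu).
  pose proof (Hcmc x y Hu) as Hm. unfold mean_curvature in Hm. rewrite dot_vadd in Hm.
  rewrite <- Hm. field. lra.
Qed.


Section Pt.
Variables x y : R.
Hypothesis Hu : U x y.

Lemma E_pos : 0 < dot (fx x y) (fx x y).
Proof. apply (proj2 Hconf x y Hu). Qed.
Lemma E_eq : dot (fy x y) (fy x y) = dot (fx x y) (fx x y).
Proof. symmetry. apply (proj2 Hconf x y Hu). Qed.
Lemma fxfy : dot (fx x y) (fy x y) = 0.
Proof. apply (proj2 Hconf x y Hu). Qed.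
Lemma NN : dot (N x y) (N x y) = 1.
Proof. apply (proj2 Hnor x y Hu). Qed.
Lemma Nfx : dot (N x y) (fx x y) = 0.
Proof. apply (proj2 Hnor x y Hu). Qed.
Lemma Nfy : dot (N x y) (fy x y) = 0.
Proof. apply (proj2 Hnor x y Hu). Qed.

Lemma F1 : dot (Nx x y) (N x y) = 0 /\ dot (Ny x y) (N x y) = 0.
Proof.
  destruct (zero_on U HU (fun u v => dot (N u v) (N u v)) 1 x y _ _
    (fun u v Hu' => proj1 (proj2 Hnor u v Hu')) Hu (dot_dpl U HU N N x y s_N s_N Hu)) as [a b].
  rewrite (dot_comm (N x y) (Nx x y)) in a. rewrite (dot_comm (N x y) (Ny x y)) in b. lra.
Qed.

Lemma F2x : dot (Nx x y) (fx x y) = - dot (fxx x y) (N x y) /\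
            dot (Ny x y) (fx x y) = - dot (fxy x y) (N x y).
Proof.
  assert (sfx : smooth3_on U fx) by sm.
  destruct (zero_on U HU (fun u v => dot (N u v) (fx u v)) 0 x y _ _
    (fun u v Hu' => proj1 (proj2 (proj2 Hnor u v Hu'))) Hu (dot_dpl U HU N fx x y s_N sfx Hu)) as [a b].
  rewrite (dot_comm (N x y)) in a, b. lra.
Qed.

Lemma F2y : dot (Nx x y) (fy x y) = - dot (fyx x y) (N x y) /\
            dot (Ny x y) (fy x y) = - dot (fyy x y) (N x y).
Proof.
  assert (sfy : smooth3_on U fy) by sm.
  destruct (zero_on U HU (fun u v => dot (N u v) (fy u v)) 0 x y _ _
    (fun u v Hu' => proj2 (proj2 (proj2 Hnor u v Hu'))) Hu (dot_dpl U HU N fy x y s_N sfy Hu)) as [a b].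
  rewrite (dot_comm (N x y)) in a, b. lra.
Qed.

Lemma F3a : dot (fxx x y) (fx x y) = dot (fyx x y) (fy x y) /\
            dot (fxy x y) (fx x y) = dot (fyy x y) (fy x y).
Proof.
  assert (sfx : smooth3_on U fx) by sm. assert (sfy : smooth3_on U fy) by sm.
  destruct (zero_on U HU (fun u v => dot (fx u v) (fx u v) - dot (fy u v) (fy u v)) 0 x y _ _
    (fun u v Hu' => ltac:(cbv beta; rewrite (proj1 (proj2 Hconf u v Hu')); ring)) Hu
    (dpl_minus _ _ _ _ _ _ _ _ (dot_dpl U HU fx fx x y sfx sfx Hu) (dot_dpl U HU fy fy x y sfy sfy Hu))) as [a b].
  rewrite (dot_comm (fx x y) (fxx x y)), (dot_comm (fy x y) (fyx x y)) in a.
  rewrite (dot_comm (fx x y) (fxy x y)), (dot_comm (fy x y) (fyy x y)) in b. lra.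
Qed.

Lemma F3b : dot (fxx x y) (fy x y) = - dot (fyx x y) (fx x y) /\
            dot (fxy x y) (fy x y) = - dot (fyy x y) (fx x y).
Proof.
  assert (sfx : smooth3_on U fx) by sm. assert (sfy : smooth3_on U fy) by sm.
  destruct (zero_on U HU (fun u v => dot (fx u v) (fy u v)) 0 x y _ _
    (fun u v Hu' => proj2 (proj2 (proj2 Hconf u v Hu'))) Hu
    (dot_dpl U HU fx fy x y sfx sfy Hu)) as [a b].
  rewrite (dot_comm (fx x y) (fyx x y)) in a.
  rewrite (dot_comm (fx x y) (fyy x y)) in b. lra.
Qed.

Lemma F4 :
  dot (pdx fxx x y) (N x y) + dot (fxx x y) (Nx x y) + dot (pdx fyy x y) (N x y) + dot (fyy x y) (Nx x y)
    = 4 * H * dot (fxx x y) (fx x y) /\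
  dot (pdy fxx x y) (N x y) + dot (fxx x y) (Ny x y) + dot (pdy fyy x y) (N x y) + dot (fyy x y) (Ny x y)
    = 4 * H * dot (fxy x y) (fx x y).
Proof.
  assert (sfx : smooth3_on U fx) by sm. assert (sfxx : smooth3_on U fxx) by sm.
  assert (sfyy : smooth3_on U fyy) by sm.
  pose proof (dpl_minus _ _ _ _ _ _ _ _
     (dpl_plus _ _ _ _ _ _ _ _ (dot_dpl U HU fxx N x y sfxx s_N Hu) (dot_dpl U HU fyy N x y sfyy s_N Hu))
     (dpl_mult _ _ _ _ _ _ _ _ (dpl_const (2 * H) x y) (dot_dpl U HU fx fx x y sfx sfx Hu))) as D.
  assert (Z : forall u v, U u v -> dot (fxx u v) (N u v) + dot (fyy u v) (N u v) - 2 * H * dot (fx u v) (fx u v) = 0).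
  { intros u v Hu'. pose proof (cmc0 u v Hu'). lra. }
  destruct (zero_on U HU _ 0 x y _ _ Z Hu D) as [a b].
  rewrite (dot_comm (fx x y) (fxx x y)) in a.
  rewrite (dot_comm (fx x y) (fxy x y)) in b. lra.
Qed.


Lemma S1 : fyx x y = fxy x y.
Proof. apply (schwarz3 U HU f x y s_f Hu). Qed.
Lemma S2 : pdx fyy x y = pdy fxy x y.
Proof.
  rewrite (schwarz3 U HU fy x y) by (sm || auto).
  apply (pdy_ext_on U HU). intros u v Hu'. apply (schwarz3 U HU f u v s_f Hu'). exact Hu.
Qed.
Lemma S3 : pdx fxy x y = pdy fxx x y.
Proof. apply (schwarz3 U HU fx x y); [sm|auto]. Qed.

Lemma frm w z : dot (fx x y) (fx x y) * dot w z =
  dot w (fx x y) * dot z (fx x y) + dot w (fy x y) * dot z (fy x y) +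
  dot (fx x y) (fx x y) * dot w (N x y) * dot z (N x y).
Proof.
  apply frame. reflexivity. apply E_eq. apply E_pos. apply fxfy. apply NN. apply Nfx. apply Nfy.
Qed.

Lemma CR1 :
  (dot (pdx fxx x y) (N x y) + dot (fxx x y) (Nx x y) - dot (pdx fyy x y) (N x y) - dot (fyy x y) (Nx x y)) / 2
  = - (dot (pdy fxy x y) (N x y) + dot (fxy x y) (Ny x y)).
Proof.
  pose proof E_pos as HE.
  destruct F1 as [n1 n2]. destruct F2x as [a1 a2]. destruct F2y as [b1 b2].
  destruct F3a as [c1 c2]. destruct F3b as [d1 d2]. destruct F4 as [e1 e2].
  pose proof (cmc0 x y Hu) as cm.
  rewrite S1 in b1, c1. rewrite S2 in e1. rewrite S2.
  pose proof (frm (fyy x y) (Nx x y)) as fr1.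
  pose proof (frm (fxy x y) (Ny x y)) as fr2.
  rewrite n1, a1, b1 in fr1. rewrite n2, a2, b2 in fr2.
  rewrite (dot_comm (fyy x y) (fx x y)), (dot_comm (fx x y) (fyy x y)) in fr1.
  rewrite (dot_comm (fyy x y) (fy x y)), (dot_comm (fy x y) (fyy x y)) in fr1.
  assert (k1 : dot (fyy x y) (fx x y) = - dot (fxx x y) (fx x y)) by lra.
  assert (k2 : dot (fyy x y) (fy x y) = dot (fxy x y) (fx x y)) by lra.
  rewrite k1, k2 in fr1.
  assert (k3 : dot (fxy x y) (fy x y) = dot (fxx x y) (fx x y)) by lra.
  rewrite k3 in fr2.
  set (E := dot (fx x y) (fx x y)) in *.
  apply Rmult_eq_reg_l with E; [|lra].
  set (P := dot (fxx x y) (fx x y)) in *.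
  set (Q := dot (fxy x y) (fx x y)) in *.
  set (L := dot (fxx x y) (N x y)) in *.
  set (M := dot (fxy x y) (N x y)) in *.
  set (Nn := dot (fyy x y) (N x y)) in *.
  set (T4 := dot (fyy x y) (Nx x y)) in *.
  set (T5 := dot (fxy x y) (Ny x y)) in *.
  assert (G : (dot (pdx fxx x y) (N x y) + dot (fxx x y) (Nx x y) - dot (pdy fxy x y) (N x y) - T4) / 2
     = - (dot (pdy fxy x y) (N x y) + T5) + (2 * H * P - T4 + T5)) by lra.
  rewrite G. rewrite Rmult_plus_distr_l.
  replace (E * (2 * H * P - T4 + T5)) with (P * (2 * H * E) - E * T4 + E * T5) by ring.
  rewrite fr1, fr2, <- cm. ring.
Qed.

Lemma CR2 :
  (dot (pdy fxx x y) (N x y) + dot (fxx x y) (Ny x y) - dot (pdy fyy x y) (N x y) - dot (fyy x y) (Ny x y)) / 2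
  = dot (pdx fxy x y) (N x y) + dot (fxy x y) (Nx x y).
Proof.
  pose proof E_pos as HE.
  destruct F1 as [n1 n2]. destruct F2x as [a1 a2]. destruct F2y as [b1 b2].
  destruct F3a as [c1 c2]. destruct F3b as [d1 d2]. destruct F4 as [e1 e2].
  pose proof (cmc0 x y Hu) as cm.
  rewrite S1 in b1, c1, d1. rewrite S3.
  pose proof (frm (fxx x y) (Ny x y)) as fr1.
  pose proof (frm (fxy x y) (Nx x y)) as fr2.
  rewrite n2, a2, b2 in fr1. rewrite n1, a1, b1 in fr2.
  pose proof (dot_comm (fx x y) (fxy x y)) as dc.
  assert (k1 : dot (fxx x y) (fy x y) = - dot (fxy x y) (fx x y)) by lra.
  rewrite k1 in fr1.
  assert (k3 : dot (fxy x y) (fy x y) = dot (fxx x y) (fx x y)) by lra.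
  rewrite k3 in fr2.
  set (E := dot (fx x y) (fx x y)) in *.
  apply Rmult_eq_reg_l with E; [|lra].
  set (P := dot (fxx x y) (fx x y)) in *.
  set (Q := dot (fxy x y) (fx x y)) in *.
  set (L := dot (fxx x y) (N x y)) in *.
  set (M := dot (fxy x y) (N x y)) in *.
  set (Nn := dot (fyy x y) (N x y)) in *.
  set (T4 := dot (fxx x y) (Ny x y)) in *.
  set (T5 := dot (fxy x y) (Nx x y)) in *.
  assert (G : (dot (pdy fxx x y) (N x y) + T4 - dot (pdy fyy x y) (N x y) - dot (fyy x y) (Ny x y)) / 2
     = dot (pdy fxx x y) (N x y) + T5 + (T4 - T5 - 2 * H * Q)) by lra.
  rewrite G. rewrite Rmult_plus_distr_l.
  replace (E * (T4 - T5 - 2 * H * Q)) with (E * T4 - E * T5 - Q * (2 * H * E)) by ring.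
  rewrite fr1, fr2, <- cm. ring.
Qed.

End Pt.

Definition uF x y := / 2 * (dot (fxx x y) (N x y) - dot (fyy x y) (N x y)).
Definition vF x y := dot (fxy x y) (N x y).
Definition uX x y := / 2 * (dot (pdx fxx x y) (N x y) + dot (fxx x y) (Nx x y) -
                          (dot (pdx fyy x y) (N x y) + dot (fyy x y) (Nx x y))).
Definition uY x y := / 2 * (dot (pdy fxx x y) (N x y) + dot (fxx x y) (Ny x y) -
                          (dot (pdy fyy x y) (N x y) + dot (fyy x y) (Ny x y))).
Definition vX x y := dot (pdx fxy x y) (N x y) + dot (fxy x y) (Nx x y).
Definition vY x y := dot (pdy fxy x y) (N x y) + dot (fxy x y) (Ny x y).

Lemma CRu x y : U x y -> uX x y = - vY x y /\ uY x y = vX x y.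
Proof.
  intros Hu. pose proof (CR1 x y Hu). pose proof (CR2 x y Hu).
  unfold uX, uY, vX, vY. split; lra.
Qed.

Lemma dpl_u x y : U x y -> differentiable_pt_lim uF x y (uX x y) (uY x y).
Proof.
  intros Hu. unfold uF, uX, uY.
  eapply dpl_eq2. apply dpl_mult. apply dpl_const. apply dpl_minus; apply (dot_dpl U HU); (sm || auto).
  all: cbv beta; ring.
Qed.
Lemma dpl_v x y : U x y -> differentiable_pt_lim vF x y (vX x y) (vY x y).
Proof.
  intros Hu. unfold vF, vX, vY. apply (dot_dpl U HU); (sm || auto).
Qed.

Ltac cont_tac := repeat first [
  (apply (cont_dot U); [sm|sm|auto]) |
  apply continuity_2d_pt_plus | apply continuity_2d_pt_minus | apply continuity_2d_pt_mult |
  apply continuity_2d_pt_opp | apply continuity_2d_pt_id1 | apply continuity_2d_pt_id2 |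
  apply continuity_2d_pt_const | (apply (cont_dot U); [sm|sm|auto]) ].

Lemma cont_u x y : U x y -> continuity_2d_pt uF x y.
Proof. intros Hu. unfold uF. cont_tac. Qed.
Lemma cont_v x y : U x y -> continuity_2d_pt vF x y.
Proof. intros Hu. unfold vF. cont_tac. Qed.
Lemma cont_uX x y : U x y -> continuity_2d_pt uX x y.
Proof. intros Hu. unfold uX. cont_tac. Qed.
Lemma cont_uY x y : U x y -> continuity_2d_pt uY x y.
Proof. intros Hu. unfold uY. cont_tac. Qed.
Lemma cont_vX x y : U x y -> continuity_2d_pt vX x y.
Proof. intros Hu. unfold vX. cont_tac. Qed.
Lemma cont_vY x y : U x y -> continuity_2d_pt vY x y.
Proof. intros Hu. unfold vY. cont_tac. Qed.

Definition AF x y := (x * x - y * y) * uF x y + 2 * x * y * vF x y.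
Definition BF x y := 2 * x * y * uF x y - (x * x - y * y) * vF x y.
Definition AX x y := 2 * x * uF x y + (x * x - y * y) * uX x y + 2 * y * vF x y + 2 * x * y * vX x y.
Definition AY x y := - 2 * y * uF x y + (x * x - y * y) * uY x y + 2 * x * vF x y + 2 * x * y * vY x y.

Lemma dpl_poly1 x y : differentiable_pt_lim (fun u v => u * u - v * v) x y (2 * x) (- 2 * y).
Proof.
  eapply dpl_eq2. apply dpl_minus; apply dpl_mult; first [apply dpl_id1 | apply dpl_id2].
  all: cbv beta; ring.
Qed.
Lemma dpl_poly2 x y : differentiable_pt_lim (fun u v => 2 * u * v) x y (2 * y) (2 * x).
Proof.
  eapply dpl_eq2. apply dpl_mult; [apply dpl_mult; [apply dpl_const|apply dpl_id1]|apply dpl_id2].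
  all: cbv beta; ring.
Qed.

Lemma dpl_A x y : U x y -> differentiable_pt_lim AF x y (AX x y) (AY x y).
Proof.
  intros Hu. unfold AF, AX, AY.
  eapply dpl_eq2. apply dpl_plus; apply dpl_mult.
  apply dpl_poly1. apply dpl_u; auto. apply dpl_poly2. apply dpl_v; auto.
  all: cbv beta; ring.
Qed.

Lemma dpl_B x y : U x y -> differentiable_pt_lim BF x y (- AY x y) (AX x y).
Proof.
  intros Hu. destruct (CRu x y Hu) as [c1 c2]. unfold BF, AX, AY.
  eapply dpl_eq2. apply dpl_minus; apply dpl_mult.
  apply dpl_poly2. apply dpl_u; auto. apply dpl_poly1. apply dpl_v; auto.
  all: cbv beta; rewrite ?c1, ?c2; ring.
Qed.

Lemma dpl_mA x y : U x y -> differentiable_pt_lim (fun u v => - AF u v) x y (- AX x y) (- AY x y).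
Proof.
  intros Hu. eapply dpl_eq2. apply dpl_ext with (fun u v => (-1) * AF u v). intros; ring.
  apply dpl_mult. apply dpl_const. apply dpl_A; auto.
  all: cbv beta; ring.
Qed.

Lemma cont_A x y : U x y -> continuity_2d_pt AF x y.
Proof.
  intros Hu. unfold AF. cont_tac; first [apply cont_u | apply cont_v]; auto.
Qed.
Lemma cont_B x y : U x y -> continuity_2d_pt BF x y.
Proof.
  intros Hu. unfold BF. cont_tac; first [apply cont_u | apply cont_v]; auto.
Qed.
Lemma cont_AX x y : U x y -> continuity_2d_pt AX x y.
Proof.
  intros Hu. unfold AX. cont_tac; first [apply cont_u | apply cont_v | apply cont_uX | apply cont_vX]; auto.
Qed.
Lemma cont_AY x y : U x y -> continuity_2d_pt AY x y.
Proof.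
  intros Hu. unfold AY. cont_tac; first [apply cont_u | apply cont_v | apply cont_uY | apply cont_vY]; auto.
Qed.

Hypothesis Hdisc : contains_closed_disc U.

Lemma int_A : RInt (fun t => AF (cos t) (sin t)) 0 (2 * PI) = 0.
Proof.
  apply (radial AF AX AY BF).
  - intros x y Hxy. apply dpl_A. apply Hdisc. lra.
  - intros x y Hxy. apply dpl_B. apply Hdisc. lra.
  - intros x y Hxy. apply cont_A. apply Hdisc. lra.
  - intros x y Hxy. apply cont_AX. apply Hdisc. lra.
  - intros x y Hxy. apply cont_AY. apply Hdisc. lra.
  - unfold AF. ring.
Qed.

Lemma int_B : RInt (fun t => BF (cos t) (sin t)) 0 (2 * PI) = 0.
Proof.
  apply (radial BF (fun x y => - AY x y) AX (fun u v => - AF u v)).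
  - intros x y Hxy. apply dpl_B. apply Hdisc. lra.
  - intros x y Hxy. eapply dpl_eq2. apply dpl_mA. apply Hdisc. lra. reflexivity. ring.
  - intros x y Hxy. apply cont_B. apply Hdisc. lra.
  - intros x y Hxy. apply continuity_2d_pt_opp. apply cont_AY. apply Hdisc. lra.
  - intros x y Hxy. apply cont_AX. apply Hdisc. lra.
  - unfold BF. ring.
Qed.

End Cod.

Definition is_derive3 (c : R -> V3) (t : R) (d : V3) : Prop :=
  is_derive (fun s => v1 (c s)) t (v1 d) /\ is_derive (fun s => v2 (c s)) t (v2 d) /\
  is_derive (fun s => v3 (c s)) t (v3 d).

Lemma dV_eq c t d : is_derive3 c t d -> dV c t = d.
Proof.
  intros [h1 [h2 h3]]. unfold dV. apply vec_ext; unfold mk3, v1 at 1, v2 at 1, v3 at 1; simpl;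
  apply is_derive_unique; assumption.
Qed.

Ltac rring := cbv beta; match goal with |- ?A = ?B => change (@eq R A B) end; unfold Dp, pdx, pdy, dot, cross, vadd, vscal, mk3, v1, v2, v3; simpl; ring.

Ltac vsimpl := unfold dot, cross, vadd, vscal, mk3, v1, v2, v3 in *; simpl in *.

Lemma D_mult (k h : R -> R) t k' h' : is_derive k t k' -> is_derive h t h' ->
  is_derive (fun s => k s * h s) t (k' * h t + k t * h').
Proof.
  intros Hk Hh. apply is_derive_Reals. apply is_derive_Reals in Hk. apply is_derive_Reals in Hh.
  apply (derivable_pt_lim_mult k h t k' h' Hk Hh).
Qed.
Lemma D_plus (k h : R -> R) t k' h' : is_derive k t k' -> is_derive h t h' ->
  is_derive (fun s => k s + h s) t (k' + h').
Proof.
  intros Hk Hh. apply is_derive_Reals. apply is_derive_Reals in Hk. apply is_derive_Reals in Hh.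
  apply (derivable_pt_lim_plus k h t k' h' Hk Hh).
Qed.
Lemma D_minus (k h : R -> R) t k' h' : is_derive k t k' -> is_derive h t h' ->
  is_derive (fun s => k s - h s) t (k' - h').
Proof.
  intros Hk Hh. apply is_derive_Reals. apply is_derive_Reals in Hk. apply is_derive_Reals in Hh.
  apply (derivable_pt_lim_minus k h t k' h' Hk Hh).
Qed.

Lemma D3_eq c t d d' : is_derive3 c t d -> d = d' -> is_derive3 c t d'.
Proof. intros H <-; exact H. Qed.

Lemma D3_add a b t a' b' : is_derive3 a t a' -> is_derive3 b t b' ->
  is_derive3 (fun s => vadd (a s) (b s)) t (vadd a' b').
Proof.
  intros [a1 [a2 a3]] [b1 [b2 b3]]. split; [|split].
  exact (D_plus _ _ t _ _ a1 b1). exact (D_plus _ _ t _ _ a2 b2). exact (D_plus _ _ t _ _ a3 b3).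
Qed.

Lemma D3_scal k a t k' a' : is_derive k t k' -> is_derive3 a t a' ->
  is_derive3 (fun s => vscal (k s) (a s)) t (vadd (vscal k' (a t)) (vscal (k t) a')).
Proof.
  intros Hk [a1 [a2 a3]]. split; [|split].
  exact (D_mult _ _ t _ _ Hk a1). exact (D_mult _ _ t _ _ Hk a2). exact (D_mult _ _ t _ _ Hk a3).
Qed.

Lemma D_dot a b t a' b' : is_derive3 a t a' -> is_derive3 b t b' ->
  is_derive (fun s => dot (a s) (b s)) t (dot a' (b t) + dot (a t) b').
Proof.
  intros [a1 [a2 a3]] [b1 [b2 b3]].
  eapply is_derive_eq.
  exact (D_plus _ _ t _ _ (D_plus _ _ t _ _ (D_mult _ _ t _ _ a1 b1) (D_mult _ _ t _ _ a2 b2)) (D_mult _ _ t _ _ a3 b3)).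
  rring.
Qed.

Lemma D3_cross a b t a' b' : is_derive3 a t a' -> is_derive3 b t b' ->
  is_derive3 (fun s => cross (a s) (b s)) t (vadd (cross a' (b t)) (cross (a t) b')).
Proof.
  intros [a1 [a2 a3]] [b1 [b2 b3]]. split; [|split].
  - eapply is_derive_eq. exact (D_minus _ _ t _ _ (D_mult _ _ t _ _ a2 b3) (D_mult _ _ t _ _ a3 b2)).
    rring.
  - eapply is_derive_eq. exact (D_minus _ _ t _ _ (D_mult _ _ t _ _ a3 b1) (D_mult _ _ t _ _ a1 b3)).
    rring.
  - eapply is_derive_eq. exact (D_minus _ _ t _ _ (D_mult _ _ t _ _ a1 b2) (D_mult _ _ t _ _ a2 b1)).
    rring.
Qed.

Lemma D3_field U F p q t p' q' : open_set2 U -> smooth3_on U F -> U (p t) (q t) ->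
  is_derive p t p' -> is_derive q t q' ->
  is_derive3 (fun s => F (p s) (q s)) t
    (vadd (vscal p' (pdx F (p t) (q t))) (vscal q' (pdy F (p t) (q t)))).
Proof.
  intros HU [h1 [h2 h3]] Hu Hp Hq. split; [|split].
  eapply is_derive_eq; [exact (sm_chain U _ p q t p' q' HU h1 Hu Hp Hq)|]; cbv beta; match goal with |- ?A = ?B => change (@eq R A B) end; unfold Dp, pdx, pdy, dot, cross, vadd, vscal, mk3, v1, v2, v3; simpl; ring.
  eapply is_derive_eq; [exact (sm_chain U _ p q t p' q' HU h2 Hu Hp Hq)|]; rring.
  eapply is_derive_eq; [exact (sm_chain U _ p q t p' q' HU h3 Hu Hp Hq)|]; rring.
Qed.

Lemma dot_add_l x y z : dot (vadd x y) z = dot x z + dot y z.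
Proof. unfold dot, vadd, mk3, v1, v2, v3; simpl; ring. Qed.
Lemma dot_add_r x y z : dot z (vadd x y) = dot z x + dot z y.
Proof. unfold dot, vadd, mk3, v1, v2, v3; simpl; ring. Qed.
Lemma dot_scal_l a x z : dot (vscal a x) z = a * dot x z.
Proof. unfold dot, vscal, mk3, v1, v2, v3; simpl; ring. Qed.
Lemma dot_scal_r a x z : dot z (vscal a x) = a * dot z x.
Proof. unfold dot, vscal, mk3, v1, v2, v3; simpl; ring. Qed.
Ltac dexp := repeat (rewrite ?dot_add_l, ?dot_add_r, ?dot_scal_l, ?dot_scal_r).

Lemma dcos t : is_derive cos t (- sin t).
Proof. auto_derive; auto; ring. Qed.
Lemma dsin t : is_derive sin t (cos t).
Proof. auto_derive; auto; ring. Qed.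
Lemma dmsin t : is_derive (fun s => - sin s) t (- cos t).
Proof. auto_derive; auto; ring. Qed.

Lemma inv_sqrt_ex (h : R -> R) t : ex_derive h t -> 0 < h t -> ex_derive (fun s => / sqrt (h s)) t.
Proof. intros. auto_derive. repeat split; auto. apply Rgt_not_eq. apply sqrt_lt_R0. auto. Qed.

Lemma frame_cross (a b n w g : V3) E :
  dot a a = E -> dot b b = E -> 0 < E -> dot a b = 0 -> dot n n = 1 -> dot n a = 0 -> dot n b = 0 ->
  E * dot (cross w g) n = dot w a * dot (cross a g) n + dot w b * dot (cross b g) n + E * dot w n * dot (cross n g) n.
Proof.
  intros. pose proof (frame a b n w (cross g n) E) as F.
  assert (e0 : forall u, dot (cross u g) n = dot u (cross g n)).
  { intros u. unfold dot, cross, mk3, v1, v2, v3; simpl; ring. }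
  assert (e1 : forall u, dot (cross g n) u = dot (cross u g) n).
  { intros u. unfold dot, cross, mk3, v1, v2, v3; simpl; ring. }
  rewrite !e0. rewrite F by auto. rewrite !e1. rewrite !e0. ring.
Qed.

Lemma gram (a b n : V3) E :
  dot a a = E -> dot b b = E -> dot a b = 0 -> dot n n = 1 -> dot n a = 0 -> dot n b = 0 ->
  dot (cross a b) n * dot (cross a b) n = E * E.
Proof.
  intros Ha Hb Hab Hn Hna Hnb.
  assert (G : dot (cross a b) n * dot (cross a b) n = dot a a * dot b b * dot n n
      + 2 * dot a b * dot n b * dot n a - dot a a * (dot n b)^2 - dot b b * (dot n a)^2 - dot n n * (dot a b)^2).
  { unfold dot, cross, mk3, v1, v2, v3; simpl; ring. }
  rewrite G, Ha, Hb, Hab, Hn, Hna, Hnb. ring.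
Qed.

Lemma cross_vec_id1 (a b n : V3) p q : dot (cross a (vadd (vscal p a) (vscal q b))) n = q * dot (cross a b) n.
Proof. unfold dot, cross, vadd, vscal, mk3, v1, v2, v3; simpl; ring. Qed.
Lemma cross_vec_id2 (a b n : V3) p q : dot (cross b (vadd (vscal p a) (vscal q b))) n = - p * dot (cross a b) n.
Proof. unfold dot, cross, vadd, vscal, mk3, v1, v2, v3; simpl; ring. Qed.
Lemma cross_self (n g : V3) : dot (cross n g) n = 0.
Proof. unfold dot, cross, mk3, v1, v2, v3; simpl; ring. Qed.
Lemma cross_scal_r (w g n : V3) k : dot (cross w (vscal k g)) n = k * dot (cross w g) n.
Proof. unfold dot, cross, vscal, mk3, v1, v2, v3; simpl; ring. Qed.

Section Bd.
Variables (U : R -> R -> Prop) (f N : R -> R -> V3) (H : R).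
Hypothesis HU : open_set2 U.
Hypothesis Hdisc : contains_closed_disc U.
Hypothesis Hconf : conformal_immersion_on U f.
Hypothesis Hnor : unit_normal_on U f N.
Hypothesis Hcmc : has_constant_mean_curvature_on U f N H.

Ltac sm := repeat match goal with
  | |- smooth3_on _ (pdx _) => apply sm3_pdx
  | |- smooth3_on _ (pdy _) => apply sm3_pdy
  end; first [exact (s_f U f Hconf) | exact (s_N U f N Hnor)].

Lemma circU t : U (cos t) (sin t).
Proof. apply Hdisc. pose proof (sin2_cos2 t). unfold Rsqr in H0. lra. Qed.

Definition G1 t := vadd (vscal (- sin t) (pdx f (cos t) (sin t))) (vscal (cos t) (pdy f (cos t) (sin t))).
Definition Xd t := vadd (vscal (- sin t) (pdx (pdx f) (cos t) (sin t))) (vscal (cos t) (pdy (pdx f) (cos t) (sin t))).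
Definition Yd t := vadd (vscal (- sin t) (pdx (pdy f) (cos t) (sin t))) (vscal (cos t) (pdy (pdy f) (cos t) (sin t))).
Definition G2 t := vadd (vadd (vscal (- cos t) (pdx f (cos t) (sin t))) (vscal (- sin t) (Xd t)))
                        (vadd (vscal (- sin t) (pdy f (cos t) (sin t))) (vscal (cos t) (Yd t))).
Definition Nt t := vadd (vscal (- sin t) (pdx N (cos t) (sin t))) (vscal (cos t) (pdy N (cos t) (sin t))).

Lemma dG1 t : is_derive3 (bcurve f) t (G1 t).
Proof.
  unfold bcurve, G1. apply (D3_field U); [auto|sm|apply circU|apply dcos|apply dsin].
Qed.

Lemma dG2 t : is_derive3 G1 t (G2 t).
Proof.
  eapply D3_eq. unfold G1. apply D3_add; eapply D3_scal.
  - apply dmsin.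
  - apply (D3_field U (pdx f) cos sin); [auto|sm|apply circU|apply dcos|apply dsin].
  - apply dcos.
  - apply (D3_field U (pdy f) cos sin); [auto|sm|apply circU|apply dcos|apply dsin].
  - reflexivity.
Qed.

Lemma dNt t : is_derive3 (bnormal N) t (Nt t).
Proof.
  unfold bnormal, Nt. apply (D3_field U); [auto|sm|apply circU|apply dcos|apply dsin].
Qed.

Lemma cs1 t : cos t * cos t + sin t * sin t = 1.
Proof. pose proof (sin2_cos2 t). unfold Rsqr in H0. lra. Qed.

Lemma g1g1 t : dot (G1 t) (G1 t) = dot (pdx f (cos t) (sin t)) (pdx f (cos t) (sin t)).
Proof.
  pose proof (circU t) as Hu. pose proof (E_eq U f Hconf _ _ Hu) as e.
  pose proof (fxfy U f Hconf _ _ Hu) as o. pose proof (cs1 t) as c.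
  unfold G1. dexp. rewrite (dot_comm (pdy f _ _) (pdx f _ _)), o, e.
  set (E := dot (pdx f (cos t) (sin t)) (pdx f (cos t) (sin t))).
  transitivity (E * (cos t * cos t + sin t * sin t)); [ring|rewrite c; ring].
Qed.

Lemma g1N t : dot (G1 t) (N (cos t) (sin t)) = 0.
Proof.
  pose proof (circU t) as Hu.
  pose proof (Nfx U f N Hnor _ _ Hu). pose proof (Nfy U f N Hnor _ _ Hu).
  unfold G1. dexp. rewrite (dot_comm (pdx f _ _)), (dot_comm (pdy f _ _)). rewrite H0, H1. ring.
Qed.

Lemma g2N t : dot (G2 t) (N (cos t) (sin t)) =
  sin t * sin t * dot (pdx (pdx f) (cos t) (sin t)) (N (cos t) (sin t))
  - 2 * sin t * cos t * dot (pdy (pdx f) (cos t) (sin t)) (N (cos t) (sin t))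
  + cos t * cos t * dot (pdy (pdy f) (cos t) (sin t)) (N (cos t) (sin t)).
Proof.
  pose proof (circU t) as Hu.
  pose proof (Nfx U f N Hnor _ _ Hu). pose proof (Nfy U f N Hnor _ _ Hu).
  pose proof (S1 U f HU Hconf _ _ Hu) as s1.
  unfold G2, Xd, Yd. dexp. rewrite (dot_comm (pdx f _ _)), (dot_comm (pdy f _ _)). rewrite H0, H1, s1. ring.
Qed.

Lemma HdV s : dV (bcurve f) s = G1 s.
Proof. apply dV_eq, dG1. Qed.
Lemma Ept s : 0 < dot (pdx f (cos s) (sin s)) (pdx f (cos s) (sin s)).
Proof. apply (E_pos U f Hconf). apply circU. Qed.
Lemma q_pos s : 0 < dot (G1 s) (G1 s).
Proof. rewrite g1g1. apply Ept. Qed.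
Lemma Hds s : dsdt f s = sqrt (dot (G1 s) (G1 s)).
Proof. unfold dsdt, vnorm. rewrite HdV. reflexivity. Qed.
Lemma Htan : tangentX f = fun s => vscal (/ sqrt (dot (G1 s) (G1 s))) (G1 s).
Proof. apply functional_extensionality. intros s. unfold tangentX. rewrite Hds, HdV. reflexivity. Qed.

Lemma dk t : ex_derive (fun s => / sqrt (dot (G1 s) (G1 s))) t.
Proof.
  apply (inv_sqrt_ex (fun s => dot (G1 s) (G1 s))).
  eexists. apply D_dot; apply dG2. apply q_pos.
Qed.

Lemma dT t : is_derive3 (tangentX f) t
  (vadd (vscal (Derive (fun s => / sqrt (dot (G1 s) (G1 s))) t) (G1 t)) (vscal (/ sqrt (dot (G1 t) (G1 t))) (G2 t))).
Proof.
  rewrite Htan. apply (D3_scal (fun s => / sqrt (dot (G1 s) (G1 s))) G1). apply Derive_correct, dk. apply dG2.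
Qed.

Lemma sq_facts t : let r := sqrt (dot (G1 t) (G1 t)) in 0 < r /\ r * r = dot (G1 t) (G1 t).
Proof.
  intros r. split. apply sqrt_lt_R0, q_pos. apply sqrt_sqrt. apply Rlt_le, q_pos.
Qed.

Lemma kappa_id t : (H - normal_curvature f N t) * dsdt f t ^ 2 = AF f N (cos t) (sin t).
Proof.
  unfold normal_curvature. rewrite (dV_eq _ _ _ (dT t)), Hds. unfold bnormal. dexp.
  rewrite g1N, g2N.
  destruct (sq_facts t) as [rp rr]. set (r := sqrt (dot (G1 t) (G1 t))) in *.
  rewrite g1g1 in rr.
  pose proof (cmc0 U f N H Hconf Hcmc _ _ (circU t)) as cm.
  pose proof (cs1 t) as c1.
  unfold AF, uF, vF.
  set (C := cos t) in *. set (S := sin t) in *.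
  set (L := dot (pdx (pdx f) C S) (N C S)) in *.
  set (M := dot (pdy (pdx f) C S) (N C S)) in *.
  set (Nn := dot (pdy (pdy f) C S) (N C S)) in *.
  set (E := dot (pdx f C S) (pdx f C S)) in *.
  set (k' := Derive _ t).
  replace ((H - / r * (k' * 0 + / r * (S * S * L - 2 * S * C * M + C * C * Nn))) * r ^ 2)
    with (H * (r * r) - (S * S * L - 2 * S * C * M + C * C * Nn)) by (field; lra).
  rewrite rr.
  replace (H * E) with ((L + Nn) / 2) by lra.
  replace ((L + Nn) / 2) with ((L + Nn) / 2 * (C * C + S * S)) by (rewrite c1; ring).
  field.
Qed.

Definition Dv x y := dot (cross (pdx f x y) (pdy f x y)) (N x y).

Lemma tors_id t : geodesic_torsion f N t * dsdt f t ^ 2 =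
  Dv (cos t) (sin t) / dot (pdx f (cos t) (sin t)) (pdx f (cos t) (sin t)) * BF f N (cos t) (sin t).
Proof.
  unfold geodesic_torsion, conormalY.
  rewrite (dV_eq _ _ _ (D3_cross _ _ _ _ _ (dNt t) (dT t))), Hds.
  rewrite dot_add_l. rewrite cross_self. rewrite Htan. cbv beta. rewrite cross_scal_r.
  destruct (sq_facts t) as [rp rr]. set (r := sqrt (dot (G1 t) (G1 t))) in *.
  rewrite g1g1 in rr.
  pose proof (circU t) as Hu.
  pose proof (Ept t) as HE.
  pose proof (frame_cross (pdx f (cos t) (sin t)) (pdy f (cos t) (sin t)) (N (cos t) (sin t)) (Nt t) (G1 t) _
    eq_refl (E_eq U f Hconf _ _ Hu) HE (fxfy U f Hconf _ _ Hu) (NN U f N Hnor _ _ Hu)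
    (Nfx U f N Hnor _ _ Hu) (Nfy U f N Hnor _ _ Hu)) as FC.
  unfold G1 in FC at 2 3 4. rewrite cross_vec_id1, cross_vec_id2, cross_self in FC.
  destruct (F1 U f N HU Hnor _ _ Hu) as [n1 n2].
  destruct (F2x U f N HU Hconf Hnor _ _ Hu) as [a1 a2].
  destruct (F2y U f N HU Hconf Hnor _ _ Hu) as [b1 b2].
  pose proof (S1 U f HU Hconf _ _ Hu) as s1. rewrite s1 in b1.
  assert (w1 : dot (Nt t) (pdx f (cos t) (sin t)) =
     - sin t * dot (pdx N (cos t) (sin t)) (pdx f (cos t) (sin t)) + cos t * dot (pdy N (cos t) (sin t)) (pdx f (cos t) (sin t))).
  { unfold Nt. dexp. ring. }
  assert (w2 : dot (Nt t) (pdy f (cos t) (sin t)) =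
     - sin t * dot (pdx N (cos t) (sin t)) (pdy f (cos t) (sin t)) + cos t * dot (pdy N (cos t) (sin t)) (pdy f (cos t) (sin t))).
  { unfold Nt. dexp. ring. }
  assert (w3 : dot (Nt t) (N (cos t) (sin t)) =
     - sin t * dot (pdx N (cos t) (sin t)) (N (cos t) (sin t)) + cos t * dot (pdy N (cos t) (sin t)) (N (cos t) (sin t))).
  { unfold Nt. dexp. ring. }
  rewrite w1, w2, w3, n1, n2, a1, a2, b1, b2 in FC.
  unfold BF, uF, vF, Dv. unfold bnormal.
  set (C := cos t) in *. set (S := sin t) in *.
  set (E := dot (pdx f C S) (pdx f C S)) in *.
  set (D := dot (cross (pdx f C S) (pdy f C S)) (N C S)) in *.
  set (T := dot (cross (Nt t) (G1 t)) (N C S)) in *.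

  replace (/ r * (/ r * T + 0) * r ^ 2) with T by (field; lra).
  apply Rmult_eq_reg_l with E; [|lra].
  rewrite FC. field. lra.
Qed.

Lemma cont_circ (g : R -> R -> R) t : (forall x y, U x y -> continuity_2d_pt g x y) ->
  continuous (fun s => g (cos s) (sin s)) t.
Proof.
  intros Hg. apply (cont_curve g cos sin). apply Hg, circU.
  apply (ex_derive_continuous (K := R_AbsRing) (V := R_NormedModule) cos). eexists; apply dcos.
  apply (ex_derive_continuous (K := R_AbsRing) (V := R_NormedModule) sin). eexists; apply dsin.
Qed.

Definition Ef x y := dot (pdx f x y) (pdx f x y).
Definition eps t := Dv (cos t) (sin t) / Ef (cos t) (sin t).

Lemma cont_Ef x y : U x y -> continuity_2d_pt Ef x y.
Proof. intros Hu. unfold Ef. apply (cont_dot U); [sm|sm|auto]. Qed.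

Lemma cont_Dv x y : U x y -> continuity_2d_pt Dv x y.
Proof.
  intros Hu.
  apply continuity_2d_pt_ext with (fun x y =>
    (v2 (pdx f x y) * v3 (pdy f x y) - v3 (pdx f x y) * v2 (pdy f x y)) * v1 (N x y) +
    (v3 (pdx f x y) * v1 (pdy f x y) - v1 (pdx f x y) * v3 (pdy f x y)) * v2 (N x y) +
    (v1 (pdx f x y) * v2 (pdy f x y) - v2 (pdx f x y) * v1 (pdy f x y)) * v3 (N x y)).
  { intros; reflexivity. }
  repeat first [ apply continuity_2d_pt_plus | apply continuity_2d_pt_minus | apply continuity_2d_pt_mult | apply continuity_2d_pt_opp |
    (apply (cont_c1 U); [sm|auto]) | (apply (cont_c2 U); [sm|auto]) | (apply (cont_c3 U); [sm|auto]) ].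
Qed.

Lemma eps_cont t : continuous eps t.
Proof.
  unfold eps. apply (cont_circ (fun x y => Dv x y / Ef x y)). intros x y Hu.
  apply continuity_2d_pt_mult. apply cont_Dv; auto. apply continuity_2d_pt_inv. apply cont_Ef; auto.
  unfold Ef. apply Rgt_not_eq. apply (E_pos U f Hconf); auto.
Qed.

Lemma eps_sq t : eps t * eps t = 1.
Proof.
  unfold eps, Ef, Dv. pose proof (circU t) as Hu. pose proof (Ept t) as HE.
  pose proof (gram _ _ _ _ eq_refl (E_eq U f Hconf _ _ Hu) (fxfy U f Hconf _ _ Hu) (NN U f N Hnor _ _ Hu)
    (Nfx U f N Hnor _ _ Hu) (Nfy U f N Hnor _ _ Hu)) as G.
  set (D := dot (cross _ _) _) in *. set (E := dot (pdx f _ _) _) in *.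
  replace (D / E * (D / E)) with ((D * D) / (E * E)) by (field; lra).
  rewrite G. field. lra.
Qed.

Lemma eps_const t : eps t = eps 0.
Proof.
  destruct (Req_dec (eps t) (eps 0)) as [e|ne]; auto. exfalso.
  assert (ev : forall s, eps s = 1 \/ eps s = -1).
  { intros s. pose proof (eps_sq s). assert ((eps s - 1) * (eps s + 1) = 0) by nra.
    apply Rmult_integral in H1. lra. }
  destruct (IVT_gen_consistent eps 0 t 0) as [z [_ hz]].
  { intros x. apply eps_cont. }
  { destruct (ev t) as [h1|h1]; destruct (ev 0) as [h2|h2]; rewrite h1, h2 in *; try lra;
    unfold Rmin, Rmax; destruct Rle_dec; lra. }
  pose proof (eps_sq z). rewrite hz in H0. lra.
Qed.

Lemma dsdt_sq t : dsdt f t ^ 2 = Ef (cos t) (sin t).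
Proof.
  rewrite Hds. destruct (sq_facts t) as [_ rr]. simpl. rewrite Rmult_1_r, rr, g1g1. reflexivity.
Qed.

Lemma ex_circ (g : R -> R -> R) : (forall x y, U x y -> continuity_2d_pt g x y) ->
  ex_RInt (fun s => g (cos s) (sin s)) 0 (2 * PI).
Proof.
  intros Hg. apply (ex_RInt_continuous (V := R_CompleteNormedModule)). intros z _. apply cont_circ; auto.
Qed.

Theorem final_main :
  RInt (fun t => (H - normal_curvature f N t) * (dsdt f t) ^ 2) 0 (2 * PI) = 0 /\
  RInt (fun t => geodesic_torsion f N t * (dsdt f t) ^ 2) 0 (2 * PI) = 0 /\
  H = / RInt (fun t => (dsdt f t) ^ 2) 0 (2 * PI) *
      RInt (fun t => normal_curvature f N t * (dsdt f t) ^ 2) 0 (2 * PI).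
Proof.
  assert (IA : RInt (fun t => AF f N (cos t) (sin t)) 0 (2 * PI) = 0) by (apply (int_A U f N H); auto).
  assert (IB : RInt (fun t => BF f N (cos t) (sin t)) 0 (2 * PI) = 0) by (apply (int_B U f N H); auto).
  assert (exA : ex_RInt (fun t => AF f N (cos t) (sin t)) 0 (2 * PI)).
  { apply ex_circ. intros; apply (cont_A U f N Hconf Hnor); auto. }
  assert (exB : ex_RInt (fun t => BF f N (cos t) (sin t)) 0 (2 * PI)).
  { apply ex_circ. intros; apply (cont_B U f N Hconf Hnor); auto. }
  assert (exE : ex_RInt (fun t => Ef (cos t) (sin t)) 0 (2 * PI)).
  { apply ex_circ. intros; apply cont_Ef; auto. }
  split; [|split].
  - transitivity (RInt (fun t => AF f N (cos t) (sin t)) 0 (2 * PI)); [|exact IA].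
    apply RInt_ext. intros; apply kappa_id.
  - transitivity (RInt (fun t => scal (eps 0) (BF f N (cos t) (sin t))) 0 (2 * PI)).
    { apply RInt_ext. intros x _. rewrite tors_id. fold (Ef (cos x) (sin x)). fold (eps x).
      rewrite eps_const. reflexivity. }
    rewrite (RInt_scal (V := R_CompleteNormedModule)) by auto. rewrite IB.
    unfold scal; simpl; unfold mult; simpl. match goal with |- ?A = ?B => change (@eq R A B) end; ring.
  - assert (EM : RInt (fun t => dsdt f t ^ 2) 0 (2 * PI) = RInt (fun t => Ef (cos t) (sin t)) 0 (2 * PI)).
    { apply RInt_ext. intros; apply dsdt_sq. }
    assert (Mpos : 0 < RInt (fun t => Ef (cos t) (sin t)) 0 (2 * PI)).
    { apply RInt_gt_0. pose proof PI_RGT_0. lra. intros x _. apply Ept.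
      intros x _. apply cont_circ. intros; apply cont_Ef; auto. }
    assert (EK : RInt (fun t => normal_curvature f N t * dsdt f t ^ 2) 0 (2 * PI) =
                 RInt (fun t => H * Ef (cos t) (sin t) - AF f N (cos t) (sin t)) 0 (2 * PI)).
    { apply RInt_ext. intros x _. rewrite <- (kappa_id x), dsdt_sq. match goal with |- ?A = ?B => change (@eq R A B) end; ring. }
    assert (EK2 : RInt (fun t => H * Ef (cos t) (sin t) - AF f N (cos t) (sin t)) 0 (2 * PI) =
                  H * RInt (fun t => Ef (cos t) (sin t)) 0 (2 * PI)).
    { transitivity (RInt (fun t => minus (scal H (Ef (cos t) (sin t))) (AF f N (cos t) (sin t))) 0 (2 * PI)).
      { apply RInt_ext. intros; reflexivity. }
      rewrite (RInt_minus (V := R_CompleteNormedModule)).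
      rewrite (RInt_scal (V := R_CompleteNormedModule)) by auto. rewrite IA.
      unfold minus, plus, opp, scal; simpl; unfold mult; simpl. match goal with |- ?A = ?B => change (@eq R A B) end; ring.
      apply (ex_RInt_scal (V := R_NormedModule)); auto. auto. }
    rewrite EM, EK, EK2. field. lra.
Qed.

End Bd.

Theorem mainTheorem2 (H : R) (U : R -> R -> Prop) (f N : R -> R -> V3) :
  open_set2 U ->
  contains_closed_disc U ->
  conformal_immersion_on U f ->
  unit_normal_on U f N ->
  has_constant_mean_curvature_on U f N H ->
  regular_analytic_curve (bcurve f) ->
  RInt (fun t => (H - normal_curvature f N t) * (dsdt f t) ^ 2) 0 (2 * PI) = 0 /\
  RInt (fun t => geodesic_torsion f N t * (dsdt f t) ^ 2) 0 (2 * PI) = 0 /\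
  H = / RInt (fun t => (dsdt f t) ^ 2) 0 (2 * PI) *
      RInt (fun t => normal_curvature f N t * (dsdt f t) ^ 2) 0 (2 * PI).
Proof.
  intros HU Hdisc Hconf Hnor Hcmc _.
  exact (final_main U f N H HU Hdisc Hconf Hnor Hcmc).
Qed.
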